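(* The class of data languages accepted by SAFA is not closed under intersection: there exist data languages $L_1,L_2\subseteq(\Sigma\times D)^*$, each accepted by some SAFA, such that no SAFA accepts $L_1\cap L_2$.
   Context: $D$ is a fixed countably infinite set of data values; for a finite alphabet $\Sigma$, data words are elements of $(\Sigma\times D)^*$. A set augmented finite automaton (SAFA) is a tuple $M=(Q,\Sigma\times D,q_0,F,H,\delta)$: $Q$ finite set of states, $q_0\in Q$ initial, $F\subseteq Q$ final, $H=\{h_1,\dots,h_m\}$ a finite collection of (names of) sets of data values, $\delta\subseteq Q\times\Sigma\times C\times OP\times Q$ with $C=\{p(h_i),\,!p(h_i): h_i\in H\}$, $OP=\{-\}\cup\{\mathsf{ins}(h_i):h_i\in H\}$. Configurations are $(q,\langle S_1,\dots,S_m\rangle)$ with $S_i\subseteq D$ finite; initially state $q_0$ and all sets empty. On reading $(a,d)$, a transition $(q,a,\alpha,op,q')$ from the current state may be taken if $\alpha=p(h_i)$ and $d\in S_i$, or $\alpha=\,!p(h_i)$ and $d\notin S_i$; then the state becomes $q'$ and if $op=\mathsf{ins}(h_j)$ the value $d$ is added to $S_j$ ($op=-$ changes nothing). A word is accepted if some run reads it entirely and ends in $F$; $L(M)$ is the set of accepted words. *)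

(* Defs.v *)
From HB Require Import structures.
From mathcomp Require Import all_boot.
Set Implicit Arguments. Unset Strict Implicit. Unset Printing Implicit Defensive.

(* Data values: the fixed countably infinite set D is taken to be nat. *)
Definition D := nat.

(* Conditions p(h_i) / !p(h_i): (true, i) = p(h_i), (false, i) = !p(h_i).
   Operations: None = "-", Some j = ins(h_j). *)
Definition cond (m : nat) := (bool * 'I_m)%type.
Definition op (m : nat) := option 'I_m.

Record SAFA (Sigma : finType) := {
  safa_Q : finType;
  safa_m : nat;
  safa_q0 : safa_Q;
  safa_F : {set safa_Q};
  safa_delta : {set (safa_Q * Sigma * cond safa_m * op safa_m * safa_Q)}
}.

Definition config (Sigma : finType) (M : SAFA Sigma) :=
  (safa_Q M * ('I_(safa_m M) -> seq D))%type.

Definition init_config (Sigma : finType) (M : SAFA Sigma) : config M :=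
  (safa_q0 M, fun _ => [::]).

Definition update (m : nat) (S : 'I_m -> seq D) (o : op m) (d : D) :
  'I_m -> seq D :=
  fun j => if o == Some j then d :: S j else S j.

Definition step (Sigma : finType) (M : SAFA Sigma) (c : config M)
    (x : Sigma * D) (c' : config M) : Prop :=
  exists (q' : safa_Q M) (b : bool) (i : 'I_(safa_m M)) (o : op (safa_m M)),
    [/\ (c.1, x.1, (b, i), o, q') \in safa_delta M,
        (x.2 \in c.2 i) = b &
        c' = (q', update c.2 o x.2)].

Inductive run (Sigma : finType) (M : SAFA Sigma) :
    config M -> seq (Sigma * D) -> config M -> Prop :=
| run_nil c : run c [::] c
| run_cons c x c' w c'' : step c x c' -> run c' w c'' -> run c (x :: w) c''.

Definition accepts (Sigma : finType) (M : SAFA Sigma) (w : seq (Sigma * D)) : Prop :=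
  exists c, run (init_config M) w c /\ c.1 \in safa_F M.

Definition accepted_by (Sigma : finType) (L : seq (Sigma * D) -> Prop) (M : SAFA Sigma) :=
  forall w, L w <-> accepts M w.

(* Main.v *)
Require Import Defs.
From mathcomp Require Import all_boot.
Set Implicit Arguments. Unset Strict Implicit. Unset Printing Implicit Defensive.

Lemma mem_update (m : nat) (S : 'I_m -> seq D) (o : op m) (x d : D) j :
  (d \in update S o x j) = ((o == Some j) && (d == x)) || (d \in S j).
Proof. by rewrite /update; case: eqP => _ //=; rewrite inE. Qed.

Lemma run4 (Sigma : finType) (M : SAFA Sigma) (c0 c : config M) x1 x2 x3 x4 :
  run c0 [:: x1; x2; x3; x4] c <->
  exists c1 c2 c3, [/\ step c0 x1 c1, step c1 x2 c2, step c2 x3 c3 & step c3 x4 c].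
Proof.
split.
- move=> H.
  have inv : forall (c c'' : config M) x w, run c (x :: w) c'' ->
      exists c', step c x c' /\ run c' w c''.
    by move=> ? ? ? ? Hr; inversion Hr; eauto.
  have [c1 [S1 R1]] := inv _ _ _ _ H.
  have [c2 [S2 R2]] := inv _ _ _ _ R1.
  have [c3 [S3 R3]] := inv _ _ _ _ R2.
  have [c4 [S4 R4]] := inv _ _ _ _ R3.
  inversion R4; subst.
  by exists c1, c2, c3.
- case=> [c1 [c2 [c3 [S1 S2 S3 S4]]]].
  apply: run_cons S1 _; apply: run_cons S2 _; apply: run_cons S3 _;
  apply: run_cons S4 _; exact: run_nil.
Qed.

Lemma run_rank (Sigma : finType) (M : SAFA Sigma) (rk : safa_Q M -> nat) :
  (forall q a b i o q', (q, a, (b, i), o, q') \in safa_delta M -> rk q' = (rk q).+1) ->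
  forall c w c', run c w c' -> rk c'.1 = rk c.1 + size w.
Proof.
move=> Hrk c w c' H; elim: H => [c0|c0 x c1 w0 c2 [q' [b [i [o [T _ ->]]]]] _ IH].
  by rewrite addn0.
by rewrite IH /= (Hrk _ _ _ _ _ _ T) addnS addSn.
Qed.

Definition P1 (t : 'I_5 * unit * cond 1 * op 1 * 'I_5) : bool :=
  let: (q, _, (b, i), o, q') := t in
  (val q' == (val q).+1) &&
  match val q with
  | 0 => ~~ b && (o == Some i)
  | 1 => ~~ b && (o == Some i)
  | 2 => ~~ b && (o == None)
  | 3 => o == None
  | _ => false
  end.

Definition P2 (t : 'I_5 * unit * cond 1 * op 1 * 'I_5) : bool :=
  let: (q, _, (b, i), o, q') := t in
  (val q' == (val q).+1) &&
  match val q with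
  | 0 => ~~ b && (o == Some i)
  | 1 => o == None
  | 2 => o == None
  | 3 => b && (o == None)
  | _ => false
  end.

Definition st (k : nat) (H : k < 5) : 'I_5 := Ordinal H.

Definition M1 : SAFA unit :=
  @Build_SAFA _ 'I_5 1 (@st 0 isT) [set @st 4 isT] [set t | P1 t].
Definition M2 : SAFA unit :=
  @Build_SAFA _ 'I_5 1 (@st 0 isT) [set @st 4 isT] [set t | P2 t].

Definition L1 (w : seq (unit * D)) : Prop :=
  exists d1 d2 d3 d4, w = [:: (tt, d1); (tt, d2); (tt, d3); (tt, d4)] /\
    [&& d2 != d1, d3 != d1 & d3 != d2].
Definition L2 (w : seq (unit * D)) : Prop :=
  exists d1 d2 d3, w = [:: (tt, d1); (tt, d2); (tt, d3); (tt, d1)].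

Lemma M1_ok : accepted_by L1 M1.
Proof.
move=> w; split.
- case=> [d1 [d2 [d3 [d4 [-> /and3P [n21 n31 n32]]]]]].
  eexists; split.
  apply/run4.
  do 3 eexists; split.
  + exists (@st 1 isT), false, ord0, (Some ord0); split => //; by rewrite inE.
  + exists (@st 2 isT), false, ord0, (Some ord0); split => //; first by rewrite inE.
    by rewrite mem_update /= in_nil orbF; apply/negbTE.
  + exists (@st 3 isT), false, ord0, None; split => //; first by rewrite inE.
    by rewrite !mem_update /= in_nil orbF; apply/negbTE; rewrite negb_or n31 n32.
  + exists (@st 4 isT); eexists; exists ord0, None; split; [by rewrite inE | reflexivity | reflexivity].
  by rewrite /= inE.
case=> c [R F].
have := run_rank (M := M1) (rk := fun q : 'I_5 => val q) _ R.
have -> : c.1 = @st 4 isT by move: F; rewrite inE => /eqP.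
move=> H; have {H} /= : 4 = size w.
  apply: H => q a b i o q'; rewrite inE => /andP [/eqP -> _] //.
case: w R => [|[[] d1] [|[[] d2] [|[[] d3] [|[[] d4] [|]]]]] //= R _.
move/run4: R => [c1 [c2 [c3 []]]].
move=> [q1 [b1 [i1 [o1 [T1 B1 ->]]]]].
move=> [q2 [b2 [i2 [o2 [T2 B2 ->]]]]].
move=> [q3 [b3 [i3 [o3 [T3 B3 ->]]]]].
move=> _.
move: T1; rewrite inE /= => /andP [/eqP E1 /andP [/negbTE nb1 /eqP eo1]].
move: T2; rewrite inE /= E1 => /andP [/eqP E2 /andP [/negbTE nb2 /eqP eo2]].
move: T3; rewrite inE /= E2 => /andP [/eqP E3 /andP [/negbTE nb3 /eqP eo3]].
subst.
move: nb2 nb3; rewrite (ord1 i1) (ord1 i2) (ord1 i3) /= !mem_update /= in_nil !orbF.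
move=> /negbT n21 /negbT; rewrite negb_or => /andP [n32 n31].
by exists d1, d2, d3, d4; split => //; rewrite n21 n31 n32.
Qed.

Lemma M2_ok : accepted_by L2 M2.
Proof.
move=> w; split.
- case=> [d1 [d2 [d3 ->]]].
  eexists; split.
  apply/run4.
  do 3 eexists; split.
  + exists (@st 1 isT), false, ord0, (Some ord0); split => //; by rewrite inE.
  + exists (@st 2 isT); eexists; exists ord0, None; split; [by rewrite inE | reflexivity | reflexivity].
  + exists (@st 3 isT); eexists; exists ord0, None; split; [by rewrite inE | reflexivity | reflexivity].
  + exists (@st 4 isT), true, ord0, None; split => //; first by rewrite inE.
    by rewrite /= !mem_update /= eqxx.
  by rewrite /= inE.
case=> c [R F].
have := run_rank (M := M2) (rk := fun q : 'I_5 => val q) _ R.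
have -> : c.1 = @st 4 isT by move: F; rewrite inE => /eqP.
move=> H; have {H} /= : 4 = size w.
  apply: H => q a b i o q'; rewrite inE => /andP [/eqP -> _] //.
case: w R => [|[[] d1] [|[[] d2] [|[[] d3] [|[[] d4] [|]]]]] //= R _.
move/run4: R => [c1 [c2 [c3 []]]].
move=> [q1 [b1 [i1 [o1 [T1 B1 ->]]]]].
move=> [q2 [b2 [i2 [o2 [T2 B2 ->]]]]].
move=> [q3 [b3 [i3 [o3 [T3 B3 ->]]]]].
move=> [q4 [b4 [i4 [o4 [T4 B4 Ec]]]]].
move: T1; rewrite inE /= => /andP [/eqP E1 /andP [_ /eqP eo1]].
move: T2; rewrite inE /= E1 => /andP [/eqP E2 /eqP eo2].
move: T3; rewrite inE /= E2 => /andP [/eqP E3 /eqP eo3].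
move: T4; rewrite inE /= E3 => /andP [/eqP E4 /andP [eb4 /eqP eo4]].
subst.
move: eb4; rewrite (ord1 i1) (ord1 i4) /= !mem_update /= in_nil !orbF => /eqP ->.
by exists d1, d2, d3.
Qed.

Theorem lemma6 :
  exists (Sigma : finType) (L1 L2 : seq (Sigma * D) -> Prop),
    (exists M1 : SAFA Sigma, accepted_by L1 M1) /\
    (exists M2 : SAFA Sigma, accepted_by L2 M2) /\
    ~ (exists M : SAFA Sigma, accepted_by (fun w => L1 w /\ L2 w) M).
Proof.
exists unit, L1, L2; split; first by exists M1; exact: M1_ok.
split; first by exists M2; exact: M2_ok.
case=> M HM.
have : accepts M [:: (tt, 0); (tt, 1); (tt, 2); (tt, 0)].
  by apply/HM; split; [exists 0, 1, 2, 0 | exists 0, 1, 2].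
case=> c [R F]; move/run4: R => [c1 [c2 [c3 []]]].
move=> [q1 [b1 [i1 [o1 [T1 B1 E1]]]]]; subst c1.
move=> [q2 [b2 [i2 [o2 [T2 B2 E2]]]]]; subst c2.
move=> [q3 [b3 [i3 [o3 [T3 B3 E3]]]]]; subst c3.
move=> [q4 [b4 [i4 [o4 [T4 B4 E4]]]]]; subst c.
set S0 := (init_config M).2 in B1 B2 B3 B4 *.
have acc : forall e1 e2 e3 e4 : D,
    (e2 \in update S0 o1 e1 i2) = b2 ->
    (e3 \in update (update S0 o1 e1) o2 e2 i3) = b3 ->
    (e4 \in update (update (update S0 o1 e1) o2 e2) o3 e3 i4) = b4 ->
    accepts M [:: (tt, e1); (tt, e2); (tt, e3); (tt, e4)].
  move=> e1 e2 e3 e4 C2 C3 C4.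
  exists (q4, update (update (update (update S0 o1 e1) o2 e2) o3 e3) o4 e4).
  split => //; apply/run4; do 3 eexists; split.
  - by exists q1, b1, i1, o1; split => //; rewrite -B1.
  - by exists q2, b2, i2, o2; split.
  - by exists q3, b3, i3, o3; split.
  - by exists q4, b4, i4, o4; split.
move: B1 B2 B3 B4 acc; rewrite /S0 /= !mem_update /= => B1 B2 B3 B4 acc.
move: B2 B3 B4; rewrite !in_nil !orbF !andbF andbT /= => B2 B3 B4.
subst b2 b3 b4.
have bad : forall e1 e2 e3 e4, accepts M [:: (tt, e1); (tt, e2); (tt, e3); (tt, e4)] ->
    [&& e2 != e1, e3 != e1 & e3 != e2] && (e4 == e1).
  move=> e1 e2 e3 e4 /HM [[d1 [d2 [d3 [d4 [E H]]]]] [d1' [d2' [d3' E']]]].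
  case: E => E1 E2 E3 E4; subst d1 d2 d3 d4.
  case: E' => E1' _ _ E4'; by rewrite H E1' E4' eqxx.
case E14: (o1 == Some i4).
  case E23: (o2 == Some i3).
    case E13: (o1 == Some i3).
      have E24 : o2 == Some i4.
        by rewrite (eqP E23) -(eqP E13) E14.
      suff: accepts M [:: (tt, 0); (tt, 1); (tt, 2); (tt, 1)] by move/bad.
      by apply: acc; rewrite !mem_update /= !in_nil ?orbF ?andbF ?andbT ?E14 ?E23 ?E13 ?E24 ?orbT.
    suff: accepts M [:: (tt, 0); (tt, 1); (tt, 0); (tt, 0)] by move/bad.
    by apply: acc; rewrite !mem_update /= !in_nil ?orbF ?andbF ?andbT ?E14 ?E23 ?E13 ?orbT.
  suff: accepts M [:: (tt, 0); (tt, 1); (tt, 1); (tt, 0)] by move/bad.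
  by apply: acc; rewrite !mem_update /= !in_nil ?orbF ?andbF ?andbT ?E14 ?E23 ?orbT.
suff: accepts M [:: (tt, 0); (tt, 1); (tt, 2); (tt, 3)] by move/bad.
by apply: acc; rewrite !mem_update /= !in_nil ?orbF ?andbF ?andbT ?E14 ?orbT.
Qed.
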